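(* The following identities hold: \begin{align*}\sum_{k=1}^\infty\frac{11319k^2-497k-746}{(4k+1)(-2)^k\binom{4k}k}&=48\log2-246, \\\sum_{k=1}^\infty\frac{39083k^2-2829k-3106}{(4k+1)(-24)^k\binom{4k}k}&=-94-64\log\frac23, \\\sum_{k=1}^\infty\frac{442611k^2+41347k-17434}{(4k+1)(-192)^k\binom{4k}k}&=26+512\log\frac34. \end{align*} *)

(* Defs.v *)
From Stdlib Require Import Reals.
From Coquelicot Require Import Coquelicot.
Open Scope R_scope.

Definition term (a b c q : R) (k : nat) : R :=
  (a * INR k ^ 2 + b * INR k + c) /
  ((4 * INR k + 1) * q ^ k * Binomial.C (4 * k)%nat k).

(* Main.v *)
Require Import Defs.
From Stdlib Require Import Reals Lra Lia Factorial.
From Coquelicot Require Import Coquelicot.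
From Stdlib Require Import ssreflect.
Open Scope R_scope.
Ltac nz := repeat split; try apply INR_fact_neq_0; try (apply not_0_INR; lia);
  try (match goal with |- context[match ?m with O => _ | S _ => _ end] => destruct m end);
  try (match goal with |- context[INR ?m] => have := pos_INR m; lra end); try lra.
Lemma minusR (a b : R) : minus a b = a - b. Proof. reflexivity. Qed.
Lemma plusR (a b : R) : plus a b = a + b. Proof. reflexivity. Qed.
Lemma scalR (a b : R) : scal a b = a * b. Proof. reflexivity. Qed.
Ltac fixINR := repeat match goal with |- context[match ?m with O => 1 | S _ => INR ?m + 1 end] => change (match m with O => 1 | S _ => INR m + 1 end) with (INR (S m)) end; rewrite ?S_INR.
Ltac ur := cbv beta; rewrite ?minusR ?plusR ?scalR; try (match goal with |- ?a = ?b => change (@eq R a b) end).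

Lemma beta0 (m : nat) : is_RInt (fun x => x ^ m) 0 1 (/ INR (S m)).
Proof.
  have H := is_RInt_derive (fun x => x ^ (S m) / INR (S m)) (fun x => x ^ m) 0 1.
  replace (/ INR (S m)) with (minus (1 ^ S m / INR (S m)) (0 ^ S m / INR (S m))).
  2:{ rewrite pow1 pow_i; [|lia]. ur. field. nz. }
  apply H.
  - intros x _. auto_derive; first by []. field; nz.
  - intros y _. apply: (@ex_derive_continuous R_AbsRing R_NormedModule). auto_derive. done.
Qed.

Lemma beta (n m : nat) : is_RInt (fun x => x ^ m * (1 - x) ^ n) 0 1
   (INR (fact m) * INR (fact n) / INR (fact (m + n + 1))).
Proof.
  revert m; induction n as [|n IH]; intro m.
  - eapply is_RInt_ext; last first.
    + replace (INR (fact m) * INR (fact 0) / INR (fact (m + 0 + 1))) with (/ INR (S m)).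
      apply (beta0 m).
      replace (m+0+1)%nat with (S m) by lia. rewrite fact_simpl mult_INR. change (fact 0) with 1%nat. rewrite INR_1.
      field; nz.
    + intros x _. simpl. ring.
  - set g := fun x => x ^ (S m) * (1 - x) ^ (S n).
    have Hg : is_RInt (fun x => INR (S m) * x ^ m * (1 - x) ^ S n - INR (S n) * (x ^ S m * (1-x)^n)) 0 1 (minus (g 1) (g 0)).
    { apply (@is_RInt_derive R_CompleteNormedModule g).
      - intros x _. rewrite /g. auto_derive; first by []. simpl pred. ur. fixINR. rewrite -!tech_pow_Rmult. replace (1 + -x) with (1-x) by ring. set A := x^m. set B := (1-x)^n. ring.
      - intros y _. apply: (@ex_derive_continuous R_AbsRing R_NormedModule). auto_derive. done. }
    have Hn := is_RInt_scal _ _ _ (INR (S n)) _ (IH (S m)).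
    have Hs := is_RInt_plus _ _ _ _ _ _ Hg Hn.
    have Hf := is_RInt_scal _ _ _ (/ INR (S m)) _ Hs.
    eapply is_RInt_ext; last first.
    + replace (INR (fact m) * INR (fact (S n)) / INR (fact (m + S n + 1))) with
        (scal (/ INR (S m)) (plus (minus (g 1) (g 0)) (scal (INR (S n)) (INR (fact (S m)) * INR (fact n) / INR (fact (S m + n + 1)))))).
      exact Hf.
      rewrite /g; ur. rewrite pow1 Rminus_diag pow_i; [|lia]. rewrite pow_i; [|lia].
      replace (m + S n + 1)%nat with (S m + n + 1)%nat by lia.
      rewrite !fact_simpl !mult_INR !S_INR.
      field; nz.
    + intros x _. ur. rewrite -!tech_pow_Rmult. set A := x^m. set B := (1-x)^n. field; nz.
Qed.

Definition Pk (a b c m : R) := a * m ^ 2 + b * m + c.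
Definition tt (q x : R) := x ^ 3 * (1 - x) / q.

Lemma powtt x q k : (x ^ 3 * (1 - x) / q) ^ k = x ^ (3 * k) * (1 - x) ^ k / q ^ k.
Proof. rewrite pow_mult. set y := x ^ 3. rewrite /Rdiv !Rpow_mult_distr pow_inv. reflexivity. Qed.

Lemma term_int a b c q k : q <> 0 ->
  is_RInt (fun x => Pk a b c (INR k) * tt q x ^ k) 0 1 (term a b c q k).
Proof.
  move=> hq.
  have H := is_RInt_scal _ _ _ (Pk a b c (INR k) / q ^ k) _ (beta k (3 * k)).
  eapply is_RInt_ext; last first.
  - replace (term a b c q k) with (scal (Pk a b c (INR k) / q ^ k)
      (INR (fact (3 * k)) * INR (fact k) / INR (fact (3 * k + k + 1)))).
    exact H.
    rewrite /term /Binomial.C /Pk; ur.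
    replace (4 * k - k)%nat with (3 * k)%nat by lia.
    replace (3 * k + k + 1)%nat with (S (4 * k)) by lia.
    rewrite fact_simpl (mult_INR (S _)) S_INR (mult_INR 4).
    replace (INR 4) with 4 by (simpl; ring).
    have hqk := pow_nonzero q k hq.
    have hk : 4 * INR k + 1 <> 0 by have := pos_INR k; lra.
    have h1 := INR_fact_neq_0 k. have h2 := INR_fact_neq_0 (3*k). have h3 := INR_fact_neq_0 (4*k).
    set Q := q ^ k. set A := INR (fact (3*k)). set B := INR (fact (4*k)). set C := INR (fact k). set K := INR k.
    field. auto.
  - intros x _. ur. rewrite /tt powtt.
    have := pow_nonzero q k hq. set Q := q ^ k. set X := x ^ (3 * k). set Y := (1-x)^k. move=> ?. rewrite /Pk. set K := INR k. field. auto.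
Qed.

Definition Gs a b c q N x := sum_n (fun n => Pk a b c (INR (S n)) * tt q x ^ (S n)) N.

Lemma partial_int a b c q N : q <> 0 ->
  is_RInt (Gs a b c q N) 0 1 (sum_n (fun n => term a b c q (S n)) N).
Proof.
  move=> hq. induction N as [|N IH].
  - rewrite /Gs sum_O. eapply is_RInt_ext; last by apply term_int.
    intros x _. by rewrite sum_O.
  - rewrite sum_Sn. eapply is_RInt_ext; last first.
    apply: (is_RInt_plus _ _ _ _ _ _ IH (term_int a b c q (S (S N)) hq)).
    intros x _. by rewrite /Gs sum_Sn.
Qed.

Definition Et a b c (N : nat) (t : R) :=
  t ^ N * t * (Pk a b c (INR N + 1) + (Pk a b c (INR N + 2) - 3 * Pk a b c (INR N + 1)) * t
     + Pk a b c (INR N) * t ^ 2) / (1 - t) ^ 3.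

Lemma closed a b c q N x : tt q x <> 1 ->
  Gs a b c q N x = Et a b c 0 (tt q x) - Et a b c (S N) (tt q x).
Proof.
  move=> h1. have h2 : 1 - tt q x <> 0 by move=> e; apply: h1; lra.
  induction N as [|N IH].
  - rewrite /Gs sum_O /Et /Pk !S_INR -!tech_pow_Rmult INR_0. set t := tt q x.
    match goal with |- ?a = ?b => change (@eq R a b) end. field. auto.
  - rewrite /Gs sum_Sn -/(Gs a b c q N x) IH plusR /Et /Pk !S_INR -!tech_pow_Rmult.
    set t := tt q x. set T := t ^ N. set K := INR N.
    match goal with |- ?a = ?b => change (@eq R a b) end. field. auto.
Qed.

Lemma Pbound a b c m B : 0 <= m <= B -> 1 <= B ->
  Rabs (Pk a b c m) <= (Rabs a + Rabs b + Rabs c) * B ^ 2.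
Proof.
  move=> hm hB. rewrite /Pk.
  have h1 : Rabs (a * m ^ 2) <= Rabs a * B ^ 2.
  { rewrite Rabs_mult. apply Rmult_le_compat_l; first by apply Rabs_pos.
    rewrite Rabs_pos_eq; simpl; nra. }
  have h2 : Rabs (b * m) <= Rabs b * B ^ 2.
  { rewrite Rabs_mult. apply Rmult_le_compat_l; first by apply Rabs_pos.
    rewrite Rabs_pos_eq; simpl; nra. }
  have h3 : Rabs c <= Rabs c * B ^ 2.
  { have := Rabs_pos c. have : 1 <= B ^ 2 by simpl; nra. nra. }
  have := Rabs_triang (a * m ^ 2 + b * m) c.
  have := Rabs_triang (a * m ^ 2) (b * m). lra.
Qed.

Lemma Ebound a b c N t : -1/8 <= t <= 0 ->
  Rabs (Et a b c N t) <= (1/8) ^ N * (6 * ((Rabs a + Rabs b + Rabs c) * (INR N + 2) ^ 2)).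
Proof.
  move=> ht. set M := Rabs a + Rabs b + Rabs c. set B := INR N + 2.
  have hN := pos_INR N.
  have hB : 1 <= B by rewrite /B; lra.
  have hp0 := Pbound a b c (INR N + 1) B ltac:(rewrite /B; lra) hB.
  have hp1 := Pbound a b c (INR N + 2) B ltac:(rewrite /B; lra) hB.
  have hp2 := Pbound a b c (INR N) B ltac:(rewrite /B; lra) hB.
  rewrite /Et -/B. set p0 := Pk a b c (INR N + 1) in hp0 *. set p1 := Pk a b c (INR N + 2) in hp1 *.
  set p2 := Pk a b c (INR N) in hp2 *. rewrite -/M in hp0 hp1 hp2. match goal with H: _ |- _ => idtac end.
  set poly := p0 + (p1 - 3 * p0) * t + p2 * t ^ 2.
  have hM : 0 <= M * B ^ 2. { have := Rabs_pos p0. idtac. lra. }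
  have hpoly : Rabs poly <= 6 * (M * B ^ 2).
  { have e1 : Rabs (p1 - 3 * p0) <= Rabs p1 + 3 * Rabs p0 by split_Rabs; lra.
    have e2 : Rabs ((p1 - 3 * p0) * t) <= Rabs (p1 - 3 * p0).
    { rewrite Rabs_mult. have := Rabs_pos (p1 - 3 * p0). have : Rabs t <= 1 by split_Rabs; lra. nra. }
    have e3 : Rabs (p2 * t ^ 2) <= Rabs p2.
    { rewrite Rabs_mult. have := Rabs_pos p2. have : Rabs (t ^ 2) <= 1 by rewrite Rabs_pos_eq; nra. nra. }
    have := Rabs_triang (p0 + (p1 - 3 * p0) * t) (p2 * t ^ 2).
    have := Rabs_triang p0 ((p1 - 3 * p0) * t). rewrite /poly. lra. }
  have hw : 0 < / (1 - t) ^ 3 <= 1.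
  { have h : 1 <= (1 - t) ^ 3 by nra. split. apply Rinv_0_lt_compat; lra.
    rewrite -Rinv_1. apply Rinv_le_contravar; lra. }
  rewrite Rdiv_def !Rabs_mult -RPow_abs (Rabs_pos_eq (/ _)); last lra.
  have hta : Rabs t <= 1/8 by split_Rabs; lra.
  have htN : Rabs t ^ N <= (1/8) ^ N by apply pow_incr; split; [apply Rabs_pos | lra].
  have := Rabs_pos t. have := Rabs_pos poly. have := pow_le (Rabs t) N (Rabs_pos t).
  move=> h1 h2 h3.
  apply Rle_trans with ((1/8) ^ N * 1 * (6 * (M * B ^ 2)) * 1); last lra.
  apply Rmult_le_compat.
  - apply Rmult_le_pos; [apply Rmult_le_pos|]; lra.
  - lra.
  - apply Rmult_le_compat.
    + apply Rmult_le_pos; lra.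
    + lra.
    + apply Rmult_le_compat; lra.
    + lra.
  - lra.
Qed.

Lemma pow4 N : (INR N + 3) ^ 2 <= 9 * 4 ^ N.
Proof.
  induction N as [|N IH].
  - simpl. lra.
  - rewrite S_INR. have := pos_INR N. simpl pow. simpl pow in IH. nra.
Qed.

Lemma tt_bound q x : q <= -2 -> 0 <= x <= 1 -> -1/8 <= tt q x <= 0.
Proof.
  move=> hq hx. rewrite /tt.
  have h0 : 0 <= x * x <= 1 by nra. have h1 : 0 <= x * (x * x) <= x by nra.
  have hu : 0 <= x ^ 3 * (1 - x) <= 1/4 by simpl; nra.
  have hw : 0 < / (- q) <= 1/2.
  { split. apply Rinv_0_lt_compat; lra.
    replace (1/2) with (/2) by field. apply Rinv_le_contravar; lra. }
  set u := x ^ 3 * (1 - x) in hu *.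
  replace (u / q) with (- (u * / (- q))) by (field; lra).
  nra.
Qed.

Lemma main a b c q (V : R) : q <= -2 ->
  is_RInt (fun x => Et a b c 0 (tt q x)) 0 1 V ->
  is_series (fun n => term a b c q (S n)) V.
Proof.
  move=> hq HV. have hq0 : q <> 0 by lra.
  set M := Rabs a + Rabs b + Rabs c.
  have hM : 0 <= M by rewrite /M; have := Rabs_pos a; have := Rabs_pos b; have := Rabs_pos c; lra.
  set Sm := fun N => sum_n (fun n => term a b c q (S n)) N.
  have key : forall N, Rabs (V - Sm N) <= 7 * M * (1/2) ^ N.
  { move=> N.
    have H1 := is_RInt_minus _ _ _ _ _ _ HV (partial_int a b c q N hq0).
    have H2 : is_RInt (fun x => Et a b c (S N) (tt q x)) 0 1 (V - Sm N).
    { eapply is_RInt_ext; last exact H1.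
      move=> x hx. rewrite Rmin_left in hx; last lra. rewrite Rmax_right in hx; last lra.
      have ht := tt_bound q x hq ltac:(lra).
      ur. rewrite (closed a b c q N x); last lra. ring. }
    have := norm_RInt_le_const_abs _ 0 1 _ (7 * M * (1/2) ^ N) _ H2.
    change (norm (V - Sm N)) with (Rabs (V - Sm N)).
    replace (Rabs (1 - 0)) with 1 by (rewrite Rminus_0_r Rabs_R1; done).
    rewrite Rmult_1_l. apply.
    move=> x hx. rewrite Rmin_left in hx; last lra. rewrite Rmax_right in hx; last lra.
    change (norm (Et a b c (S N) (tt q x))) with (Rabs (Et a b c (S N) (tt q x))).
    apply Rle_trans with (1 := Ebound a b c (S N) (tt q x) (tt_bound q x hq hx)).
    rewrite -/M S_INR.
    have hp := pow4 N.
    replace (INR N + 1 + 2) with (INR N + 3) by ring.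
    have e : (1/2) ^ N = (1/8) ^ N * 4 ^ N.
    { rewrite -Rpow_mult_distr. f_equal. field. }
    rewrite e. simpl pow at 1.
    have h8 : 0 <= (1/8) ^ N by apply pow_le; lra.
    have h4 : 0 <= 4 ^ N by apply pow_le; lra.
    have := Rmult_le_compat_l ((1/8) ^ N * M) _ _ ltac:(apply Rmult_le_pos; lra) hp.
    set X := (1/8) ^ N in h8 *. set Y := 4 ^ N in h4 *. set Z := (INR N + 3) ^ 2. have : 0 <= X * M * Y by apply Rmult_le_pos; [apply Rmult_le_pos|]; lra. nra. }
  rewrite /is_series.
  change (is_lim_seq Sm V).
  apply is_lim_seq_le_le with (u := fun N => V - 7 * M * (1/2) ^ N) (w := fun N => V + 7 * M * (1/2) ^ N).
  - move=> N. have := key N. rewrite Rabs_le_between. lra.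
  - have := is_lim_seq_geom (1/2) ltac:(rewrite Rabs_pos_eq; lra).
    move/(is_lim_seq_scal_l _ (- (7 * M))) => H.
    have := is_lim_seq_plus' _ _ _ _ (is_lim_seq_const V) H.
    rewrite /= Rmult_0_r Rplus_0_r. apply is_lim_seq_ext => n. ring.
  - have := is_lim_seq_geom (1/2) ltac:(rewrite Rabs_pos_eq; lra).
    move/(is_lim_seq_scal_l _ (7 * M)) => H.
    have := is_lim_seq_plus' _ _ _ _ (is_lim_seq_const V) H.
    rewrite /= Rmult_0_r Rplus_0_r. apply is_lim_seq_ext => n. ring.
Qed.

Ltac sc := repeat split; try lra;
  repeat (apply Rmult_integral_contrapositive_currified);
  try (apply Rlt_not_eq; lra); try (apply Rgt_not_eq; lra).

Definition U1 x := 992 - 3176*x + 96*x^2 + 952*x^3 - 9182*x^4 + 7264*x^5 + 138*x^6 - 60*x^7.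
Definition F1 x := U1 x / (x^4 - x^3 - 2)^2 + 746 * x + 36 * ln (x + 1) - 12 * ln (2 - 2*x + 2*x^2 - x^3).

Lemma I1 : is_RInt (fun x => Et 11319 (-497) (-746) 0 (tt (-2) x)) 0 1 (48 * ln 2 - 246).
Proof.
  replace (48 * ln 2 - 246) with (minus (F1 1) (F1 0)).
  2:{ ur. rewrite /F1 /U1.
      have -> : 1 + 1 = 2 by ring. have -> : 2 - 2*1 + 2*1^2 - 1^3 = 1 by ring.
      have -> : 0 + 1 = 1 by ring. have -> : 2 - 2*0 + 2*0^2 - 0^3 = 2 by ring.
      rewrite ln_1. field. }
  apply (@is_RInt_derive R_CompleteNormedModule F1).
  - move=> x hx. rewrite Rmin_left in hx; last lra. rewrite Rmax_right in hx; last lra.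
    have h2 : 0 <= x * x <= 1 by nra. have h3 : 0 <= x * (x * x) <= 1 by nra.
    have hL : 0 < x + 1 by lra.
    have e2 : x^2 = x*x by ring. have e3 : x^3 = x*(x*x) by ring. have e4 : x^4 = x*(x*(x*x)) by ring.
    have h4 : 0 <= x*(x*(x*x)) <= 1 by nra.
    have h5 : 0 <= (x*x)*(1-x) by apply Rmult_le_pos; lra.
    have h6 : 0 <= (1-x)*(1-x) by nra.
    have hC : 0 < 2 - 2*x + 2*x^2 - x^3 by rewrite e2 e3; nra.
    have hD : x^4 - x^3 - 2 < 0. rewrite e3 e4. lra.
    rewrite /F1 /U1. auto_derive.
    + sc.
    + ur. rewrite /Et /tt /Pk INR_0. field. sc.
  - move=> x hx. rewrite Rmin_left in hx; last lra. rewrite Rmax_right in hx; last lra.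
    have h2 : 0 <= x * x <= 1 by nra. have h3 : 0 <= x * (x * x) <= 1 by nra.
    have h4 : 0 <= x*(x*(x*x)) <= 1 by nra.
    apply: (@ex_derive_continuous R_AbsRing R_NormedModule).
    rewrite /Et /tt /Pk. auto_derive. sc.
Qed.

Definition U2 x := 460800 - 1807488*x + 4608*x^2 + 37248*x^3 - 387720*x^4 + 309888*x^5 + 408*x^6 - 144*x^7.
Definition F2 x := U2 x / (x^4 - x^3 - 24)^2 + 3106 * x + 48 * ln (x + 2) - 16 * ln (12 - 6*x + 3*x^2 - x^3).

Lemma I2 : is_RInt (fun x => Et 39083 (-2829) (-3106) 0 (tt (-24) x)) 0 1 (-94 - 64 * ln (2/3)).
Proof.
  replace (-94 - 64 * ln (2/3)) with (minus (F2 1) (F2 0)).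
  2:{ ur. rewrite /F2 /U2.
      have -> : 1 + 2 = 3 by ring. have -> : 12 - 6*1 + 3*1^2 - 1^3 = 2*2*2 by ring.
      have -> : 0 + 2 = 2 by ring. have -> : 12 - 6*0 + 3*0^2 - 0^3 = 3*(2*2) by ring.
      have l4 : ln (2*2) = ln 2 + ln 2 by apply ln_mult; lra.
      have l8 : ln (2*2*2) = ln (2*2) + ln 2 by apply ln_mult; lra.
      have l12 : ln (3*(2*2)) = ln 3 + ln (2*2) by apply ln_mult; lra.
      have ld : ln (2/3) = ln 2 - ln 3 by apply ln_div; lra.
      rewrite ld l8 l12 l4. field. }
  apply (@is_RInt_derive R_CompleteNormedModule F2).
  - move=> x hx. rewrite Rmin_left in hx; last lra. rewrite Rmax_right in hx; last lra.
    have h2 : 0 <= x * x <= 1 by nra. have h3 : 0 <= x * (x * x) <= 1 by nra.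
    have h4 : 0 <= x*(x*(x*x)) <= 1 by nra.
    rewrite /F2 /U2. auto_derive.
    + sc.
    + ur. rewrite /Et /tt /Pk INR_0. field. sc.
  - move=> x hx. rewrite Rmin_left in hx; last lra. rewrite Rmax_right in hx; last lra.
    have h2 : 0 <= x * x <= 1 by nra. have h3 : 0 <= x * (x * x) <= 1 by nra.
    have h4 : 0 <= x*(x*(x*x)) <= 1 by nra.
    apply: (@ex_derive_continuous R_AbsRing R_NormedModule).
    rewrite /Et /tt /Pk. auto_derive. sc.
Qed.

Definition U3 x := 160432128 - 637968384*x + 589824*x^2 + 1794048*x^3 - 30715968*x^4 + 24569856*x^5 + 192*x^6 + 1920*x^7.
Definition F3 x := U3 x / (x^4 - x^3 - 192)^2 + 17434 * x + 384 * ln (4 - x) - 128 * ln (48 + 12*x + 3*x^2 + x^3).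

Lemma I3 : is_RInt (fun x => Et 442611 41347 (-17434) 0 (tt (-192) x)) 0 1 (26 + 512 * ln (3/4)).
Proof.
  replace (26 + 512 * ln (3/4)) with (minus (F3 1) (F3 0)).
  2:{ ur. rewrite /F3 /U3.
      have -> : 4 - 1 = 3 by ring. have -> : 48 + 12*1 + 3*1^2 + 1^3 = (2*2*2)*(2*2*2) by ring.
      have -> : 4 - 0 = 2*2 by ring. have -> : 48 + 12*0 + 3*0^2 + 0^3 = 3*(2*2*(2*2)) by ring.
      have -> : (4:R) = 2*2 by ring.
      have l4 : ln (2*2) = ln 2 + ln 2 by apply ln_mult; lra.
      have l8 : ln (2*2*2) = ln (2*2) + ln 2 by apply ln_mult; lra.
      have l64 : ln ((2*2*2)*(2*2*2)) = ln (2*2*2) + ln (2*2*2) by apply ln_mult; lra.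
      have l16 : ln (2*2*(2*2)) = ln (2*2) + ln (2*2) by apply ln_mult; lra.
      have l48 : ln (3*(2*2*(2*2))) = ln 3 + ln (2*2*(2*2)) by apply ln_mult; lra.
      have ld : ln (3/(2*2)) = ln 3 - ln (2*2) by apply ln_div; lra.
      rewrite ld l64 l48 l16 l8 l4. field. }
  apply (@is_RInt_derive R_CompleteNormedModule F3).
  - move=> x hx. rewrite Rmin_left in hx; last lra. rewrite Rmax_right in hx; last lra.
    have h2 : 0 <= x * x <= 1 by nra. have h3 : 0 <= x * (x * x) <= 1 by nra.
    have h4 : 0 <= x*(x*(x*x)) <= 1 by nra.
    rewrite /F3 /U3. auto_derive.
    + sc.
    + ur. rewrite /Et /tt /Pk INR_0. field. sc.
  - move=> x hx. rewrite Rmin_left in hx; last lra. rewrite Rmax_right in hx; last lra.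
    have h2 : 0 <= x * x <= 1 by nra. have h3 : 0 <= x * (x * x) <= 1 by nra.
    have h4 : 0 <= x*(x*(x*x)) <= 1 by nra.
    apply: (@ex_derive_continuous R_AbsRing R_NormedModule).
    rewrite /Et /tt /Pk. auto_derive. sc.
Qed.

Theorem lemma3p3 :
  is_series (fun n => term 11319 (-497) (-746) (-2) (S n)) (48 * ln 2 - 246) /\
  is_series (fun n => term 39083 (-2829) (-3106) (-24) (S n)) (-94 - 64 * ln (2/3)) /\
  is_series (fun n => term 442611 41347 (-17434) (-192) (S n)) (26 + 512 * ln (3/4)).
Proof.
  split; [|split].
  - apply main; [lra | exact I1].
  - apply main; [lra | exact I2].
  - apply main; [lra | exact I3].
Qed.
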